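(* At every point $R\in V_N$ with $q(R)>0$, the curvature tensor $$S_{pqrs}=C_{tqr}\,C_p{}^t{}_s-C_{tqs}\,C_p{}^t{}_r,\qquad C_p{}^t{}_s=g^{tu}C_{pus},$$ of the Finsleroid metric function is $$S_{pqrs}=S^*\,\frac{h_{pr}h_{qs}-h_{ps}h_{qr}}{K^2}\quad\text{with}\quad S^*=-\frac14g^2 .$$
   Context: Let $N\ge2$, $V_N=\mathbb{R}^N$ with points $R=(R^1,\dots,R^N)$, $Z=R^N$; indices $a,b$ run over $1,\dots,N-1$, indices $p,q,r,s,t,u$ over $1,\dots,N$, repeated indices summed. Fix a symmetric positive-definite matrix $(r_{ab})$, $q(R)=\sqrt{r_{ab}R^aR^b}$. Fix $g\in(-2,2)$, $h=\sqrt{1-g^2/4}$, $G=g/h$. Define $B(g;R)=Z^2+gqZ+q^2$, $A(g;R)=Z+\frac12gq$, $\Phi(g;R)=\arctan(A/(hq))$ for $q>0$ ($\Phi=\pm\pi/2$ if $q=0$, $Z\gtrless0$), $J=e^{\frac12G\Phi}$, and $K(g;R)=\sqrt{B}\,J$. Let $g_{pq}=\frac12\partial^2K^2/\partial R^p\partial R^q$ with inverse $g^{pq}$, $R_p=\frac12\partial K^2/\partial R^p$, $h_{pq}=g_{pq}-R_pR_q/K^2$, and Cartan tensor $C_{pqr}=\frac12\partial g_{pq}/\partial R^r$. *)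

(* Defs.v *)
From HB Require Import structures.
From mathcomp Require Import all_boot all_order all_algebra.
From mathcomp Require Import all_classical all_reals all_analysis.
Set Implicit Arguments. Unset Strict Implicit. Unset Printing Implicit Defensive.
Import Order.TTheory GRing.Theory Num.Theory.
Import numFieldNormedType.Exports.
Local Open Scope ring_scope.

Section Finsleroid.
Variable R : realType.
Variable n : nat. (* N = n.+1 ; indices a over 'I_n, indices p over 'I_n.+1 *)
Implicit Types (x : 'rV[R]_n.+1) (r : 'M[R]_n) (g : R).

Definition Ra x (a : 'I_n) : R := x 0 (widen_ord (leqnSn n) a).
Definition Zc x : R := x 0 ord_max.

Definition qf r x : R := Num.sqrt (\sum_(a < n) \sum_(b < n) r a b * Ra x a * Ra x b).

Definition hpar g : R := Num.sqrt (1 - g ^+ 2 / 4).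
Definition Gpar g : R := g / hpar g.

Definition Bf r g x : R := Zc x ^+ 2 + g * qf r x * Zc x + qf r x ^+ 2.
Definition Af r g x : R := Zc x + g * qf r x / 2.
Definition Phif r g x : R :=
  if 0 < qf r x then atan (Af r g x / (hpar g * qf r x))
  else if 0 < Zc x then pi / 2 else if Zc x < 0 then - (pi / 2) else 0.
Definition Jf r g x : R := expR (Gpar g * Phif r g x / 2).
Definition Kf r g x : R := Num.sqrt (Bf r g x) * Jf r g x.
Definition K2 r g x : R := Kf r g x ^+ 2.

Definition pd (f : 'rV[R]_n.+1 -> R) (p : 'I_n.+1) x : R :=
  'D_(delta_mx 0 p) f x.

Definition gmet r g (p q : 'I_n.+1) x : R := pd (pd (K2 r g) q) p x / 2.
Definition gmat r g x : 'M[R]_n.+1 := \matrix_(p, q) gmet r g p q x.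
Definition ginv r g x : 'M[R]_n.+1 := invmx (gmat r g x).
Definition Rlow r g (p : 'I_n.+1) x : R := pd (K2 r g) p x / 2.
Definition hang r g (p q : 'I_n.+1) x : R :=
  gmet r g p q x - Rlow r g p x * Rlow r g q x / K2 r g x.
Definition Cartan r g (p q s : 'I_n.+1) x : R := pd (gmet r g p q) s x / 2.
Definition Cmixed r g (p t s : 'I_n.+1) x : R :=
  \sum_(u < n.+1) ginv r g x t u * Cartan r g p u s x.
Definition Scurv r g (p q r' s : 'I_n.+1) x : R :=
  \sum_(t < n.+1) (Cartan r g t q r' x * Cmixed r g p t s x
                   - Cartan r g t q s x * Cmixed r g p t r' x).
End Finsleroid.

(* Main.v *)
Require Import Defs.
From HB Require Import structures.
From mathcomp Require Import all_boot all_order all_algebra.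
From mathcomp Require Import all_classical all_reals all_analysis.
From mathcomp Require Import ring lra.
Import Order.TTheory GRing.Theory Num.Theory.
Import numFieldNormedType.Exports.
Local Open Scope ring_scope.
Section Gen.
Context {R : realType} {V : normedModType R}.

Lemma derive_line (f : V -> R) x v :
  'D_v f x = 'D_1 (fun h : R => f (h *: v + x)) 0.
Proof.
rewrite /derive; do 2 f_equal; apply/funext => h /=.
by rewrite scale0r add0r /shift /= addr0 [h%:A]mulr1.
Qed.

Lemma dline (f : V -> R) x v df :
  is_derive (0:R) 1 (fun h : R => f (h *: v + x)) df -> is_derive x v f df.
Proof.
move=> [d1 e1]; split; first exact/derivable1P.
by rewrite derive_line.
Qed.

Lemma dline' (f : V -> R) x v df :
  is_derive x v f df -> is_derive (0:R) 1 (fun h : R => f (h *: v + x)) df.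
Proof.
move=> [d1 e1]; split; first exact: ((derivable1P f x v).1 d1).
by rewrite -e1 derive_line.
Qed.

Lemma dcomp (f : V -> R) (G : R -> R) x v df dG :
  is_derive x v f df -> is_derive (f x) 1 G dG ->
  is_derive x v (fun y => G (f y)) (dG * df).
Proof.
move=> /dline' hf hG; apply: dline.
have hG' : is_derive ((fun h : R => f (h *: v + x)) 0) 1 G dG.
  by rewrite /= scale0r add0r.
exact: (@is_derive1_comp R G (fun h : R => f (h *: v + x)) 0 dG df hG' hf).
Qed.

Lemma dM (a b : V -> R) x v da db :
  is_derive x v a da -> is_derive x v b db ->
  is_derive x v (fun y => a y * b y) (a x * db + b x * da).
Proof. by move=> ha hb; have := is_deriveM ha hb. Qed.

Lemma dD (a b : V -> R) x v da db :
  is_derive x v a da -> is_derive x v b db ->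
  is_derive x v (fun y => a y + b y) (da + db).
Proof. by move=> ha hb; have := is_deriveD ha hb. Qed.

Lemma dB (a b : V -> R) x v da db :
  is_derive x v a da -> is_derive x v b db ->
  is_derive x v (fun y => a y - b y) (da - db).
Proof. by move=> ha hb; have := is_deriveB ha hb. Qed.

Lemma dC (c : R) x v : is_derive x v (fun _ : V => c) 0.
Proof. exact: is_derive_cst. Qed.

Lemma dV (a : V -> R) x v da : a x != 0 ->
  is_derive x v a da -> is_derive x v (fun y => (a y)^-1) (- da / (a x)^+2).
Proof.
move=> ha [d1 e1]; split; first exact: derivableV.
rewrite deriveV // e1 -[_ *: _]/(_ * _).
by rewrite mulNr mulrC mulNr.
Qed.

Lemma dN (a : V -> R) x v da :
  is_derive x v a da -> is_derive x v (fun y => - a y) (- da).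
Proof. by move=> ha; have := is_deriveN ha. Qed.

Lemma dsum (m : nat) (a : 'I_m -> V -> R) x v (da : 'I_m -> R) :
  (forall i, is_derive x v (a i) (da i)) ->
  is_derive x v (fun y => \sum_(i < m) a i y) (\sum_(i < m) da i).
Proof.
move=> h; have := is_derive_sum h.
suff -> : (\sum_(i < m) a i) = (fun y => \sum_(i < m) a i y) by [].
by apply/funext => y; rewrite fct_sumE.
Qed.

Lemma dexp (a : V -> R) x v da :
  is_derive x v a da -> is_derive x v (fun y => expR (a y)) (expR (a x) * da).
Proof. by move=> h; apply: dcomp h _. Qed.

Lemma datan (a : V -> R) x v da :
  is_derive x v a da -> is_derive x v (fun y => atan (a y)) ((1 + a x ^+ 2)^-1 * da).
Proof. by move=> h; apply: dcomp h _. Qed.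

Lemma dsqrt (a : V -> R) x v da : 0 < a x ->
  is_derive x v a da -> is_derive x v (fun y => Num.sqrt (a y)) ((2 * Num.sqrt (a x))^-1 * da).
Proof. by move=> ha h; apply: dcomp h (is_derive1_sqrt ha). Qed.


Lemma cM (a b : V -> R) x : {for x, continuous a} -> {for x, continuous b} ->
  {for x, continuous (fun y => a y * b y)}.
Proof. by move=> ha hb; apply: continuousM. Qed.

Lemma cSum (m : nat) (a : 'I_m -> V -> R) x : (forall i, {for x, continuous (a i)}) ->
  {for x, continuous (fun y => \sum_(i < m) a i y)}.
Proof.
move=> h.
have -> : (fun y => \sum_(i < m) a i y) = (fun y => \sum_(i <- index_enum 'I_m) a i y).
  by [].
elim: (index_enum _) => [|i s IH].
  have -> : (fun y : V => \sum_(i <- [::]) a i y) = (fun=> 0).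
    by apply/funext => y; rewrite big_nil.
  by apply: cst_continuous.
have -> : (fun y : V => \sum_(j <- i :: s) a j y) = (a i + fun y => \sum_(j <- s) a j y).
  by apply/funext => y; rewrite big_cons.
exact: continuousD.
Qed.
End Gen.
Arguments dM {R V a b x v da db}.
Arguments dD {R V a b x v da db}.
Arguments dB {R V a b x v da db}.
Arguments dN {R V a x v da}.
Arguments dV {R V a x v da}.
Arguments dsum {R V m a x v da}.
Arguments dexp {R V a x v da}.
Arguments datan {R V a x v da}.
Arguments dsqrt {R V a x v da}.
Arguments dC {R V} c {x v}.

Ltac side := repeat (apply/andP; split); try assumption.

Section Main.
Variables (R : realType) (n : nat) (r : 'M[R]_n) (g : R).
Hypothesis rsym : r^T = r.
Hypothesis hg : -2 < g < 2.

Notation V := 'rV[R]_n.+1.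
Notation NN := (@ord_max n).

Definition rp (p u : 'I_n.+1) : R :=
  match unlift ord_max p, unlift ord_max u with
  | Some a, Some b => r a b | _, _ => 0 end.
Definition rho p (y : V) := \sum_(u < n.+1) rp p u * y 0 u.
Definition Q2 (y : V) := \sum_(p < n.+1) rho p y * y 0 p.
Definition nf (p : 'I_n.+1) : R := (p == ord_max)%:R.
Definition lf p (y : V) := rho p y / qf r y.
Definition kf p (y : V) := qf r y * nf p - Zc y * lf p y.
Definition mt p u (y : V) := rp p u - lf p y * lf u y.
Definition Rh p (y : V) := rho p y + (Zc y + g * qf r y) * nf p.
Definition ef (y : V) := expR (Gpar g * atan (Af r g y / (hpar g * qf r y))).
Definition K2s (y : V) := Bf r g y * ef y.
Definition D1f p (y : V) := 2 * ef y * Rh p y.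
Definition G2f p q (y : V) :=
  ef y * (mt p q y + (kf p y * kf q y + Rh p y * Rh q y) / Bf r g y).

Lemma unlift_widen (a : 'I_n) : unlift ord_max (widen_ord (leqnSn n) a) = Some a.
Proof.
have -> : widen_ord (leqnSn n) a = lift ord_max a by apply: val_inj; rewrite /= /bump leqNgt ltn_ord.
by rewrite liftK.
Qed.

Lemma rpN1 u : rp NN u = 0.
Proof. by rewrite /rp unlift_none. Qed.
Lemma rpN2 u : rp u NN = 0.
Proof. by rewrite /rp unlift_none; case: (unlift _ u). Qed.
Lemma rpW a b : rp (widen_ord (leqnSn n) a) (widen_ord (leqnSn n) b) = r a b.
Proof. by rewrite /rp !unlift_widen. Qed.
Lemma rsymE a b : r a b = r b a.
Proof. by rewrite -{1}rsym mxE. Qed.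
Lemma rp_sym p u : rp p u = rp u p.
Proof. by rewrite /rp; case: (unlift _ p) => [a|]; case: (unlift _ u) => [b|] //; rewrite rsymE. Qed.

Lemma rhoN y : rho NN y = 0.
Proof. by rewrite /rho big1 // => u _; rewrite rpN1 mul0r. Qed.

Lemma Q2E y : Q2 y = \sum_(a < n) \sum_(b < n) r a b * Ra y a * Ra y b.
Proof.
rewrite /Q2 big_ord_recr /= rhoN mul0r addr0; apply: eq_bigr => a _.
rewrite /rho big_ord_recr /= rpN2 mul0r addr0 mulr_suml; apply: eq_bigr => b _.
by rewrite rpW /Ra; ring.
Qed.

Lemma qfE y : qf r y = Num.sqrt (Q2 y).
Proof. by rewrite /qf Q2E. Qed.


Lemma dco y s u : is_derive y (delta_mx 0 s) (fun z : V => z 0 u) (u == s)%:R.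
Proof.
apply: dline.
have -> : (fun h : R => (h *: (delta_mx 0 s : V) + y) 0 u) =
          (fun h : R => h * (u == s)%:R + y 0 u).
  by apply/funext => h; rewrite !mxE eqxx.
eapply is_derive_eq.
  by apply: dD.
by rewrite scaler0 add0r addr0 [_%:A]mulr1.
Qed.

Lemma sum_dl (F : 'I_n.+1 -> R) s : \sum_(u < n.+1) F u * (u == s)%:R = F s.
Proof.
rewrite (bigD1 s) //= eqxx mulr1 big1 ?addr0 // => u /negPf ->; by rewrite mulr0.
Qed.

Lemma drho y s p : is_derive y (delta_mx 0 s) (rho p) (rp p s).
Proof.
eapply is_derive_eq.
  by apply: dsum => u; apply (dM (dC _) (dco _ _ _)).
rewrite -(sum_dl (rp p) s); apply: eq_bigr => u _; ring.
Qed.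

Lemma dQ2 y s : is_derive y (delta_mx 0 s) Q2 (2 * rho s y).
Proof.
eapply is_derive_eq.
  by apply: dsum => u; apply (dM (drho _ _ _) (dco _ _ _)).
rewrite big_split /= sum_dl /rho mulr2n mulrDl mul1r addrC; congr (_ + _).
by apply: eq_bigr => u _; rewrite rp_sym mulrC.
Qed.


Lemma Q2pos {y} : 0 < qf r y -> 0 < Q2 y.
Proof. by rewrite qfE sqrtr_gt0. Qed.

Lemma hh2 : hpar g ^+ 2 = 1 - g ^+ 2 / 4.
Proof. rewrite /hpar sqr_sqrtr //; case/andP: hg => h1 h2; nra. Qed.

Lemma hhpos : 0 < hpar g.
Proof. rewrite /hpar sqrtr_gt0; case/andP: hg => h1 h2; nra. Qed.

Lemma BfE y : Bf r g y = hpar g ^+ 2 * qf r y ^+ 2 + Af r g y ^+ 2.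
Proof. by rewrite hh2 /Bf /Af; field. Qed.

Lemma Bpos {y} : 0 < qf r y -> 0 < Bf r g y.
Proof.
move=> hy; rewrite BfE; apply: ltr_wpDr; first exact: sqr_ge0.
by apply: mulr_gt0; apply: exprn_gt0; [exact: hhpos | exact: hy].
Qed.

Lemma dq {y} s : 0 < qf r y -> is_derive y 'e_s (qf r) (lf s y).
Proof.
move=> hy; have hQ := Q2pos hy.
have hq0 : Num.sqrt (Q2 y) != 0 by rewrite -qfE lt0r_neq0.
have -> : qf r = (fun z => Num.sqrt (Q2 z)) by apply/funext => z; rewrite qfE.
eapply is_derive_eq; first exact: (dsqrt hQ (dQ2 y s)).
by rewrite /lf qfE; field.
Qed.

Lemma dZ y s : is_derive y 'e_s (@Zc R n) (nf s).
Proof. by eapply is_derive_eq; [exact: dco | rewrite /nf eq_sym]. Qed.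

Lemma dl {y} s p : 0 < qf r y -> is_derive y 'e_s (lf p) (mt p s y / qf r y).
Proof.
move=> hy; have hq0 : qf r y != 0 by rewrite lt0r_neq0.
eapply is_derive_eq; first exact: (dM (drho y s p) (dV hq0 (dq s hy))).
by rewrite /mt /lf; field.
Qed.

Lemma dk {y} s p : 0 < qf r y -> is_derive y 'e_s (kf p)
  (lf s y * nf p - nf s * lf p y - Zc y * mt p s y / qf r y).
Proof.
move=> hy; have hq0 : qf r y != 0 by rewrite lt0r_neq0.
eapply is_derive_eq; first exact: (dB (dM (dq s hy) (dC _)) (dM (dZ y s) (dl s p hy))).
by rewrite /=; field.
Qed.

Lemma dmt {y} s p u : 0 < qf r y -> is_derive y 'e_s (mt p u)
  (- (mt p s y * lf u y + lf p y * mt u s y) / qf r y).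
Proof.
move=> hy; have hq0 : qf r y != 0 by rewrite lt0r_neq0.
eapply is_derive_eq; first exact: (dB (dC _) (dM (dl s p hy) (dl s u hy))).
by rewrite /=; field.
Qed.

Lemma dRh {y} s p : 0 < qf r y -> is_derive y 'e_s (Rh p)
  (rp p s + (nf s + g * lf s y) * nf p).
Proof.
move=> hy.
eapply is_derive_eq; first exact: (dD (drho y s p) (dM (dD (dZ y s) (dM (dC g) (dq s hy))) (dC _))).
by rewrite /=; ring.
Qed.

Lemma dBf {y} s : 0 < qf r y -> is_derive y 'e_s (Bf r g)
  ((2 * Zc y + g * qf r y) * nf s + (g * Zc y + 2 * qf r y) * lf s y).
Proof.
move=> hy.
have -> : Bf r g = (fun z => Zc z * Zc z + g * qf r z * Zc z + qf r z * qf r z).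
  by apply/funext => z; rewrite /Bf !expr2.
eapply is_derive_eq.
  exact: (dD (dD (dM (dZ y s) (dZ y s)) (dM (dM (dC g) (dq s hy)) (dZ y s))) (dM (dq s hy) (dq s hy))).
by rewrite /=; ring.
Qed.

Lemma def {y} s : 0 < qf r y -> is_derive y 'e_s ef (ef y * g * kf s y / Bf r g y).
Proof.
move=> hy; have hq0 : qf r y != 0 by rewrite lt0r_neq0.
have hh0 : hpar g != 0 by rewrite lt0r_neq0 // hhpos.
have hB0 : hpar g ^+ 2 * qf r y ^+ 2 + Af r g y ^+ 2 != 0 by rewrite -BfE lt0r_neq0 // Bpos.
have hhq : hpar g * qf r y != 0 by rewrite mulf_neq0.
rewrite /ef /Af.
have H1 := (dD (dZ y s) (dM (dM (dC g) (dq s hy)) (dC (2^-1)))).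
have H2 := (dV (a := fun z : V => hpar g * qf r z) hhq (dM (dC (hpar g)) (dq s hy))).
have H3 := dM H1 H2.
have H4 := datan H3.
have H5 := dM (dC (Gpar g)) H4.
have H6 := dexp H5.
eapply is_derive_eq.
  exact: H6.
clear H1 H2 H3 H4 H5 H6.
rewrite BfE /ef /Gpar /kf /lf /Af /=.
set E := expR _; set T := atan _.
field; rewrite hq0 hh0 !andbT.
apply: lt0r_neq0; apply: ltr_wpDr; first exact: sqr_ge0.
by apply: mulr_gt0; [apply: exprn_gt0; apply: mulr_gt0 => //; exact: hhpos | rewrite ltr0n].
Qed.


Lemma dK2s {y} s : 0 < qf r y -> is_derive y 'e_s K2s (D1f s y).
Proof.
move=> hy; have hB := Bpos hy; have hB0 : Bf r g y != 0 by rewrite lt0r_neq0.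
eapply is_derive_eq; first exact: (dM (dBf s hy) (def s hy)).
have hq0 : qf r y != 0 by rewrite lt0r_neq0.
rewrite /D1f /Rh /kf /lf /Bf /=.
by field; side.
Qed.

Lemma contQ2 x : {for x, continuous Q2}.
Proof.
apply: cSum => p; apply: cM; last exact: (@coord_continuous R 1 n.+1 0 p x).
apply: cSum => u; apply: cM; first by apply: cst_continuous.
apply: coord_continuous.
Qed.

Lemma near_pos x : 0 < qf r x -> \forall y \near x, 0 < qf r y.
Proof.
move=> hx; have := cvgr_gt (Q2 x) (contQ2 x) 0 (Q2pos hx).
move=> H; near=> y; rewrite qfE sqrtr_gt0; near: y; exact: H.
Unshelve. all: by end_near.
Qed.

Lemma K2_eq y : 0 < qf r y -> K2 r g y = K2s y.
Proof.
move=> hy; rewrite /K2 /Kf /K2s /Jf /ef /Phif hy exprMn sqr_sqrtr; last first.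
  by apply: ltW; apply: Bpos.
congr (_ * _); rewrite expr2 -expRD; congr expR.
by field.
Qed.


Definition Cf p q s (y : V) :=
  (g * ef y / (2 * Bf r g y)) * (mt p q y * kf s y + mt p s y * kf q y + mt q s y * kf p y)
  + (g * ef y / Bf r g y ^+ 2) * (kf p y * kf q y * kf s y).

Lemma pdK2 y s : 0 < qf r y -> pd (K2 r g) s y = D1f s y.
Proof.
move=> hy; rewrite /pd.
have H : \forall z \near y, K2 r g z = K2s z.
  near=> z; apply: K2_eq; near: z; exact: near_pos hy.
rewrite (near_eq_derive _ H).
by have [_ ->] := dK2s s hy.
Unshelve. all: by end_near.
Qed.

Lemma dD1 {y} p q : 0 < qf r y -> is_derive y 'e_p (D1f q) (2 * G2f p q y).
Proof.
move=> hy; have hB := Bpos hy; have hB0 : Bf r g y != 0 by rewrite lt0r_neq0.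
have hq0 : qf r y != 0 by rewrite lt0r_neq0.
eapply is_derive_eq; first exact: (dM (dM (dC 2) (def p hy)) (dRh p q hy)).
rewrite /G2f /mt /Rh /kf /lf /Bf /= (rp_sym q p).
by field; side.
Qed.

Lemma gmetE y p q : 0 < qf r y -> gmet r g p q y = G2f p q y.
Proof.
move=> hy; rewrite /gmet.
have H : \forall z \near y, pd (K2 r g) q z = D1f q z.
  near=> z; apply: pdK2; near: z; exact: near_pos hy.
rewrite /pd (near_eq_derive _ H).
have [_ ->] := dD1 p q hy.
by rewrite mulrC mulKf // pnatr_eq0.
Unshelve. all: by end_near.
Qed.

Lemma dG2 {y} p q s : 0 < qf r y -> is_derive y 'e_s (G2f p q) (2 * Cf p q s y).
Proof.
move=> hy; have hB := Bpos hy; have hB0 : Bf r g y != 0 by rewrite lt0r_neq0.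
have hq0 : qf r y != 0 by rewrite lt0r_neq0.
eapply is_derive_eq.
  exact: (dM (def s hy) (dD (dmt s p q hy) (dM (dD (dM (dk s p hy) (dk s q hy))
     (dM (dRh s p hy) (dRh s q hy))) (dV hB0 (dBf s hy))))).
rewrite /Cf /mt /Rh /kf /lf /Bf /=.
by field; side.
Qed.

Lemma CartanE y p q s : 0 < qf r y -> Cartan r g p q s y = Cf p q s y.
Proof.
move=> hy; rewrite /Cartan.
have H : \forall z \near y, gmet r g p q z = G2f p q z.
  near=> z; apply: gmetE; near: z; exact: near_pos hy.
rewrite /pd (near_eq_derive _ H).
have [_ ->] := dG2 p q s hy.
by rewrite mulrC mulKf // pnatr_eq0.
Unshelve. all: by end_near.
Qed.


Definition Lv (x : V) t := (t != NN)%:R * x 0 t / qf r x.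
Definition dlt (b t : 'I_n.+1) : R := ((t == b) && (b != NN))%:R.

Lemma Q2E2 x : 0 < qf r x -> Q2 x = qf r x ^+ 2.
Proof. by move=> hx; rewrite qfE sqr_sqrtr // ltW // Q2pos. Qed.

Lemma sum_nf (F : 'I_n.+1 -> R) : \sum_t F t * nf t = F NN.
Proof. by rewrite /nf sum_dl. Qed.

Lemma sum_dlt (F : 'I_n.+1 -> R) b : \sum_t F t * dlt b t = F b * (b != NN)%:R.
Proof.
rewrite /dlt; case: (b =P NN) => [->|_] /=.
  by rewrite big1 ?mulr0 // => t _; rewrite andbF mulr0.
by rewrite mulr1; under eq_bigr do rewrite andbT; rewrite sum_dl.
Qed.

Lemma rp_neq a b : rp b a * (b != NN)%:R = rp b a.
Proof. by case: (b =P NN) => [->|_]; rewrite ?rpN1 ?mulr0 ?mulr1. Qed.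
Lemma rho_neq x b : rho b x * (b != NN)%:R = rho b x.
Proof. by case: (b =P NN) => [->|_]; rewrite ?rhoN ?mulr0 ?mulr1. Qed.
Lemma nf_neq b : nf b * (b != NN)%:R = 0.
Proof. by rewrite /nf; case: (b == NN); rewrite /= ?mulr0 ?mul0r. Qed.

Lemma b1 x a : \sum_t rp t a * Lv x t = lf a x.
Proof.
rewrite /lf /rho /Lv mulr_suml; apply: eq_bigr => t _.
rewrite (rp_sym t a); case: (t =P NN) => [->|_]; first by rewrite rpN2 !mul0r.
by rewrite mul1r mulrA.
Qed.

Lemma b2 x : 0 < qf r x -> \sum_t rho t x * Lv x t = qf r x.
Proof.
move=> hx; have hq0 : qf r x != 0 by rewrite lt0r_neq0.
rewrite /Lv.
have -> : \sum_t rho t x * ((t != NN)%:R * x 0 t / qf r x) = Q2 x / qf r x.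
  rewrite /Q2 mulr_suml; apply: eq_bigr => t _.
  case: (t =P NN) => [->|_]; first by rewrite rhoN !mul0r.
  by rewrite mul1r mulrA.
by rewrite Q2E2 // expr2 mulfK.
Qed.

Lemma b3 x : \sum_t nf t * Lv x t = 0.
Proof.
rewrite big1 // => t _; rewrite /nf /Lv.
by case: (t =P NN) => [->|_] /=; rewrite ?mul0r ?mulr0.
Qed.

Lemma master x a b c1 c2 c3 d1 d2 d3 : 0 < qf r x ->
  \sum_t (c1 * rp t a + c2 * rho t x + c3 * nf t) * (d1 * Lv x t + d2 * nf t + d3 * dlt b t)
  = c1 * d1 * lf a x + c1 * d3 * rp b a + c2 * d1 * qf r x + c2 * d3 * rho b x + c3 * d2.
Proof.
move=> hx.
rewrite (eq_bigr (fun t => c1 * d1 * (rp t a * Lv x t) + c1 * d2 * (rp t a * nf t)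
  + c1 * d3 * (rp t a * dlt b t) + c2 * d1 * (rho t x * Lv x t) + c2 * d2 * (rho t x * nf t)
  + c2 * d3 * (rho t x * dlt b t) + c3 * d1 * (nf t * Lv x t) + c3 * d2 * (nf t * nf t)
  + c3 * d3 * (nf t * dlt b t))); last by move=> t _; ring.
rewrite !big_split -!mulr_sumr /=.
rewrite b1 b2 // b3 !sum_nf !sum_dlt rp_neq rho_neq nf_neq rpN1 rhoN /nf eqxx.
by rewrite !mulr0 !addr0 mulr1.
Qed.


Definition Kv (x : V) t := (Zc x + g * qf r x) * Lv x t - qf r x * nf t.
Definition Pv (x : V) b t := dlt b t - lf b x * Lv x t.

Ltac dotm x c1 c2 c3 d1 d2 d3 a b :=
  rewrite (eq_bigr (fun t => (c1 * rp t a + c2 * rho t x + c3 * nf t) *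
                             (d1 * Lv x t + d2 * nf t + d3 * dlt b t)));
  [rewrite master // | move=> t _];
  rewrite /mt /kf /Rh /Pv /Kv /lf; by field.

Section Dots.
Variable x : V.
Hypothesis hx : 0 < qf r x.
Let hq0 : qf r x != 0. Proof. by rewrite lt0r_neq0. Qed.

Lemma mtP a b : \sum_t mt t a x * Pv x b t = mt b a x.
Proof. dotm x (1:R) (- lf a x / qf r x) (0:R) (- lf b x) (0:R) (1:R) a b. Qed.
Lemma kP b : \sum_t kf t x * Pv x b t = 0.
Proof. dotm x (0:R) (- Zc x / qf r x) (qf r x) (- lf b x) (0:R) (1:R) (@ord_max n) b. Qed.
Lemma RP b : \sum_t Rh t x * Pv x b t = 0.
Proof. dotm x (0:R) (1:R) (Zc x + g * qf r x) (- lf b x) (0:R) (1:R) (@ord_max n) b. Qed.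
Lemma mtK a : \sum_t mt t a x * Kv x t = 0.
Proof. dotm x (1:R) (- lf a x / qf r x) (0:R) (Zc x + g * qf r x) (- qf r x) (0:R) a (@ord_max n). Qed.
Lemma kK : \sum_t kf t x * Kv x t = - Bf r g x.
Proof. rewrite /Bf; dotm x (0:R) (- Zc x / qf r x) (qf r x) (Zc x + g * qf r x) (- qf r x) (0:R) (@ord_max n) (@ord_max n). Qed.
Lemma RK : \sum_t Rh t x * Kv x t = 0.
Proof. dotm x (0:R) (1:R) (Zc x + g * qf r x) (Zc x + g * qf r x) (- qf r x) (0:R) (@ord_max n) (@ord_max n). Qed.
Lemma mtL a : \sum_t mt t a x * Lv x t = 0.
Proof. dotm x (1:R) (- lf a x / qf r x) (0:R) (1:R) (0:R) (0:R) a (@ord_max n). Qed.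
Lemma kL : \sum_t kf t x * Lv x t = - Zc x.
Proof. dotm x (0:R) (- Zc x / qf r x) (qf r x) (1:R) (0:R) (0:R) (@ord_max n) (@ord_max n). Qed.
Lemma RL : \sum_t Rh t x * Lv x t = qf r x.
Proof. dotm x (0:R) (1:R) (Zc x + g * qf r x) (1:R) (0:R) (0:R) (@ord_max n) (@ord_max n). Qed.
End Dots.


Lemma sum33 (f1 f2 f3 h1 h2 h3 : 'I_n.+1 -> R) a1 a2 a3 b1 b2 b3 :
  \sum_t (a1 * f1 t + a2 * f2 t + a3 * f3 t) * (b1 * h1 t + b2 * h2 t + b3 * h3 t) =
  a1 * b1 * (\sum_t f1 t * h1 t) + a1 * b2 * (\sum_t f1 t * h2 t) + a1 * b3 * (\sum_t f1 t * h3 t) +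
  a2 * b1 * (\sum_t f2 t * h1 t) + a2 * b2 * (\sum_t f2 t * h2 t) + a2 * b3 * (\sum_t f2 t * h3 t) +
  a3 * b1 * (\sum_t f3 t * h1 t) + a3 * b2 * (\sum_t f3 t * h2 t) + a3 * b3 * (\sum_t f3 t * h3 t).
Proof.
rewrite !mulr_sumr -!big_split /=; apply: eq_bigr => t _; ring.
Qed.

Lemma mt_sym p u x : mt p u x = mt u p x.
Proof. by rewrite /mt rp_sym mulrC. Qed.

Definition Xv x p s t :=
  g / (2 * Bf r g x) * kf s x * Pv x p t + g / (2 * Bf r g x) * kf p x * Pv x s t
  - (g / (2 * Bf r g x) * mt p s x + g / Bf r g x ^+ 2 * kf p x * kf s x) * Kv x t.

Lemma gX x p s t : 0 < qf r x ->
  \sum_u gmet r g t u x * Xv x p s u = Cf p t s x.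
Proof.
move=> hx; have hB := Bpos hx; have hB0 : Bf r g x != 0 by rewrite lt0r_neq0.
have he0 : ef x != 0 by rewrite lt0r_neq0 // expR_gt0.
rewrite (eq_bigr (fun u => (ef x * mt u t x + ef x * kf t x / Bf r g x * kf u x + ef x * Rh t x / Bf r g x * Rh u x)
  * (g / (2 * Bf r g x) * kf s x * Pv x p u + g / (2 * Bf r g x) * kf p x * Pv x s u
    + (- (g / (2 * Bf r g x) * mt p s x + g / Bf r g x ^+ 2 * kf p x * kf s x)) * Kv x u))); last first.
  move=> u _; rewrite gmetE // /G2f /Xv (mt_sym t u); field; side.
rewrite sum33 !mtP // !kP // !RP // mtK // kK // RK //.
rewrite /Cf (mt_sym s t) (mt_sym p t); field; side.
Qed.


Lemma widen_lift (a : 'I_n) : lift ord_max a = widen_ord (leqnSn n) a.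
Proof. by apply: val_inj; rewrite /= /bump leqNgt ltn_ord. Qed.

Lemma gK x t : 0 < qf r x -> \sum_p gmet r g t p x * Kv x p = - ef x * kf t x.
Proof.
move=> hx; have hB := Bpos hx; have hB0 : Bf r g x != 0 by rewrite lt0r_neq0.
rewrite (eq_bigr (fun p => (ef x * mt p t x + ef x * kf t x / Bf r g x * kf p x + ef x * Rh t x / Bf r g x * Rh p x)
  * (1 * Kv x p + 0 * Kv x p + 0 * Kv x p))); last first.
  move=> p _; rewrite gmetE // /G2f (mt_sym t p); field; side.
rewrite sum33 mtK // kK // RK //; field; side.
Qed.

Lemma gL x t : 0 < qf r x -> \sum_p gmet r g t p x * Lv x p =
  ef x * (qf r x * Rh t x - Zc x * kf t x) / Bf r g x.
Proof.
move=> hx; have hB := Bpos hx; have hB0 : Bf r g x != 0 by rewrite lt0r_neq0.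
rewrite (eq_bigr (fun p => (ef x * mt p t x + ef x * kf t x / Bf r g x * kf p x + ef x * Rh t x / Bf r g x * Rh p x)
  * (1 * Lv x p + 0 * Lv x p + 0 * Lv x p))); last first.
  move=> p _; rewrite gmetE // /G2f (mt_sym t p); field; side.
rewrite sum33 mtL // kL // RL //; field; side.
Qed.

Lemma gunit x : 0 < qf r x ->
  (forall v : 'rV[R]_n, v != 0 -> 0 < (v *m r *m v^T) 0 0) ->
  gmat r g x \in unitmx.
Proof.
move=> hx hpos.
have hB := Bpos hx; have hB0 : Bf r g x != 0 by rewrite lt0r_neq0.
have he0 : ef x != 0 by rewrite lt0r_neq0 // expR_gt0.
have hq0 : qf r x != 0 by rewrite lt0r_neq0.
rewrite -row_free_unit -kermx_eq0; apply/eqP/row_matrixP => i; rewrite row0.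
set u := row i (kermx (gmat r g x)).
have hu : u *m gmat r g x = 0 by apply/sub_kermxP; exact: row_sub.
clearbody u.
have hw : forall p, \sum_t u 0 t * gmet r g t p x = 0.
  move=> p; have := congr1 (fun M : 'M[R]_(1, n.+1) => M 0 p) hu; rewrite !mxE => H.
  transitivity (\sum_j u 0 j * gmat r g x j p); last exact: H.
  by apply: eq_bigr => t _; rewrite /gmat mxE.
pose al := \sum_t u 0 t * kf t x.
pose be := \sum_t u 0 t * Rh t x.
have hal : al = 0.
  have : \sum_p (\sum_t u 0 t * gmet r g t p x) * Kv x p = 0.
    by rewrite big1 // => p _; rewrite hw mul0r.
  rewrite (eq_bigr (fun p => \sum_t u 0 t * gmet r g t p x * Kv x p)); last first.
    by move=> p _; rewrite mulr_suml.
  rewrite exchange_big /=.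
  rewrite (eq_bigr (fun t => (- ef x) * (u 0 t * kf t x))); last first.
    by move=> t _; under eq_bigr do rewrite -mulrA; rewrite -mulr_sumr gK //; ring.
  rewrite -mulr_sumr => /eqP; rewrite mulf_eq0 oppr_eq0 (negbTE he0) /= => /eqP.
  by [].
have hbe : be = 0.
  have : \sum_p (\sum_t u 0 t * gmet r g t p x) * Lv x p = 0.
    by rewrite big1 // => p _; rewrite hw mul0r.
  rewrite (eq_bigr (fun p => \sum_t u 0 t * gmet r g t p x * Lv x p)); last first.
    by move=> p _; rewrite mulr_suml.
  rewrite exchange_big /=.
  rewrite (eq_bigr (fun t => (ef x * qf r x / Bf r g x) * (u 0 t * Rh t x)
     + (- (ef x * Zc x / Bf r g x)) * (u 0 t * kf t x))); last first.
    by move=> t _; under eq_bigr do rewrite -mulrA; rewrite -mulr_sumr gL //; field; side.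
  rewrite big_split /= -!mulr_sumr -/al -/be hal mulr0 addr0 => /eqP.
  rewrite !mulf_eq0 invr_eq0 (negbTE he0) (negbTE hq0) (negbTE hB0) /=.
  by move/eqP.
pose la := \sum_t u 0 t * lf t x.
have hal2 : al = qf r x * u 0 NN - Zc x * la.
  rewrite /al /la /kf -sum_nf mulr_sumr mulr_sumr -sumrB.
  by apply: eq_bigr => t _; ring.
have hbe2 : be = qf r x * la + (Zc x + g * qf r x) * u 0 NN.
  rewrite /be /la -sum_nf mulr_sumr mulr_sumr -big_split /=.
  by apply: eq_bigr => t _; rewrite /Rh /lf; field.
have hla : la = 0.
  have : Bf r g x * la = 0.
    have -> : Bf r g x * la = - (Zc x + g * qf r x) * al + qf r x * be.
      by rewrite hal2 hbe2 /Bf; ring.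
    by rewrite hal hbe; ring.
  by move/eqP; rewrite mulf_eq0 (negbTE hB0) /= => /eqP.
have huN : u 0 NN = 0.
  have : Bf r g x * u 0 NN = 0.
    have -> : Bf r g x * u 0 NN = Zc x * be + qf r x * al.
      by rewrite hal2 hbe2 /Bf; ring.
    by rewrite hal hbe; ring.
  by move/eqP; rewrite mulf_eq0 (negbTE hB0) /= => /eqP.
have hr : forall p, \sum_t u 0 t * rp t p = 0.
  move=> p; have := hw p.
  rewrite (eq_bigr (fun t => ef x * (u 0 t * rp t p) + (- (ef x * lf p x)) * (u 0 t * lf t x)
     + ef x * kf p x / Bf r g x * (u 0 t * kf t x) + ef x * Rh p x / Bf r g x * (u 0 t * Rh t x)));
    last first.
    by move=> t _; rewrite gmetE // /G2f /mt; field; side.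
  rewrite !big_split /= -!mulr_sumr -/al -/be -/la hal hbe hla !mulr0 !addr0.
  by move/eqP; rewrite mulf_eq0 (negbTE he0) /= => /eqP.
pose v := \row_(a < n) u 0 (widen_ord (leqnSn n) a).
have hv : v = 0.
  apply/eqP; apply/negPn/negP => /hpos.
  suff -> : (v *m r *m v^T) 0 0 = 0 by rewrite ltxx.
  rewrite mxE big1 // => b _.
  have := hr (widen_ord (leqnSn n) b); rewrite big_ord_recr /= rpN1 mulr0 addr0 => H.
  have -> : (v *m r) 0 b = 0.
    rewrite mxE; transitivity (\sum_(a < n) u 0 (widen_ord (leqnSn n) a) * rp (widen_ord (leqnSn n) a) (widen_ord (leqnSn n) b)); last exact: H.
    by apply: eq_bigr => a _; rewrite mxE rpW.
  by rewrite mul0r.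
apply/rowP => t; rewrite !mxE.
case: (unliftP ord_max t) => [a ->|->]; last exact: huN.
by rewrite widen_lift; have := congr1 (fun M : 'rV[R]_n => M 0 a) hv; rewrite !mxE.
Qed.


Lemma CmixedE x p t s : 0 < qf r x ->
  (forall v : 'rV[R]_n, v != 0 -> 0 < (v *m r *m v^T) 0 0) ->
  Cmixed r g p t s x = Xv x p s t.
Proof.
move=> hx hpos.
pose Cc : 'cV[R]_n.+1 := \col_u Cartan r g p u s x.
pose Xc : 'cV[R]_n.+1 := \col_u Xv x p s u.
have gXc : gmat r g x *m Xc = Cc.
  apply/matrixP => i j; rewrite !mxE (CartanE _ _ _ _ hx) -(gX _ p s i hx).
  by apply: eq_bigr => u _; rewrite !mxE.
have -> : Cmixed r g p t s x = (ginv r g x *m Cc) t 0.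
  by rewrite mxE /Cmixed; apply: eq_bigr => u _; rewrite mxE.
by rewrite -gXc /ginv mulKmx ?gunit // mxE.
Qed.

Lemma hangE x p q : 0 < qf r x ->
  hang r g p q x = ef x * (mt p q x + kf p x * kf q x / Bf r g x).
Proof.
move=> hx; have hB := Bpos hx; have hB0 : Bf r g x != 0 by rewrite lt0r_neq0.
have he0 : ef x != 0 by rewrite lt0r_neq0 // expR_gt0.
rewrite /hang /Rlow !pdK2 // gmetE // K2_eq // /G2f /D1f /K2s.
by field; side.
Qed.

Lemma mainS x p q r' s : 0 < qf r x ->
  (forall v : 'rV[R]_n, v != 0 -> 0 < (v *m r *m v^T) 0 0) ->
  Scurv r g p q r' s x =
      (- (g ^+ 2 / 4)) *
      ((hang r g p r' x * hang r g q s x - hang r g p s x * hang r g q r' x)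
       / K2 r g x).
Proof.
move=> hx hpos.
have hB := Bpos hx; have hB0 : Bf r g x != 0 by rewrite lt0r_neq0.
have he0 : ef x != 0 by rewrite lt0r_neq0 // expR_gt0.
rewrite /Scurv sumrB.
have E : forall r1 s1, \sum_(t < n.+1) Cartan r g t q r1 x * Cmixed r g p t s1 x =
   (g * ef x / (2 * Bf r g x) * kf r1 x) * (g / (2 * Bf r g x) * kf s1 x) * mt p q x
 + (g * ef x / (2 * Bf r g x) * kf r1 x) * (g / (2 * Bf r g x) * kf p x) * mt s1 q x
 + (g * ef x / (2 * Bf r g x) * kf q x) * (g / (2 * Bf r g x) * kf s1 x) * mt p r1 x
 + (g * ef x / (2 * Bf r g x) * kf q x) * (g / (2 * Bf r g x) * kf p x) * mt s1 r1 x
 + (g * ef x / (2 * Bf r g x) * mt q r1 x + g * ef x / Bf r g x ^+ 2 * kf q x * kf r1 x)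
   * (- (g / (2 * Bf r g x) * mt p s1 x + g / Bf r g x ^+ 2 * kf p x * kf s1 x)) * (- Bf r g x).
  move=> r1 s1.
  rewrite (eq_bigr (fun t =>
    (g * ef x / (2 * Bf r g x) * kf r1 x * mt t q x + g * ef x / (2 * Bf r g x) * kf q x * mt t r1 x
     + (g * ef x / (2 * Bf r g x) * mt q r1 x + g * ef x / Bf r g x ^+ 2 * kf q x * kf r1 x) * kf t x)
    * (g / (2 * Bf r g x) * kf s1 x * Pv x p t + g / (2 * Bf r g x) * kf p x * Pv x s1 t
    + (- (g / (2 * Bf r g x) * mt p s1 x + g / Bf r g x ^+ 2 * kf p x * kf s1 x)) * Kv x t))); last first.
    move=> t _; rewrite CmixedE // CartanE // /Cf /Xv (mt_sym q r1).
    move: (g * ef x / (2 * Bf r g x)) (g * ef x / Bf r g x ^+ 2) (g / (2 * Bf r g x)) (g / Bf r g x ^+ 2) => a1 a2 a3 a4.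
    ring.
  rewrite sum33 !mtP // !kP // !mtK // kK //.
  move: (g * ef x / (2 * Bf r g x)) (g * ef x / Bf r g x ^+ 2) (g / (2 * Bf r g x)) (g / Bf r g x ^+ 2) => a1 a2 a3 a4.
  ring.
rewrite [X in X - _](E r' s) [X in _ - X](E s r').
rewrite !hangE // K2_eq // /K2s.
rewrite (mt_sym s q) (mt_sym r' q) (mt_sym s r').
move: (mt p q x) (mt q s x) (mt p r' x) (mt r' s x) (mt q r' x) (mt p s x) => m1 m2 m3 m4 m5 m6.
move: (kf p x) (kf q x) (kf r' x) (kf s x) => k1 k2 k3 k4.
move: (ef x) (Bf r g x) he0 hB0 => e B he0 hB0.
by field; side.
Qed.

End Main.

Theorem theorem2p2 (R : realType) (n : nat) (r : 'M[R]_n) (g : R)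
  (x : 'rV[R]_n.+1) :
  (0 < n)%N ->
  r^T = r ->
  (forall v : 'rV[R]_n, v != 0 -> 0 < (v *m r *m v^T) 0 0) ->
  -2 < g < 2 ->
  0 < qf r x ->
  forall p q r' s : 'I_n.+1,
    Scurv r g p q r' s x =
      (- (g ^+ 2 / 4)) *
      ((hang r g p r' x * hang r g q s x - hang r g p s x * hang r g q r' x)
       / K2 r g x).
Proof.
move=> _ rsym hpos hg hx p q r' s.
exact: (@mainS R n r g rsym hg x p q r' s hx hpos).
Qed.
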